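(* Let $\mathfrak{X}=(X,\{R_i\}_{i=0}^{d+1})$ be a commutative association scheme with $R_d^\top=R_{d+1}$ and $R_i^\top=R_i$ for $0\le i\le d-1$, adjacency matrices $A_0,\dots,A_{d+1}$ and primitive idempotents $E_0,\dots,E_{d+1}$; let $V_i=E_i\mathbb{C}^{|X|}$. Let its symmetrization $\tilde{\mathfrak X}=(X,\{\tilde R_i\}_{i=0}^d)$ ($\tilde R_i=R_i$ for $i\le d-1$, $\tilde R_d=R_d\cup R_{d+1}$) be amorphic with primitive idempotents $\tilde E_0,\dots,\tilde E_d$ numbered so that the adjacency matrix $\tilde A_i$ of $\tilde R_i$ (valency $k_i$) satisfies $\tilde A_i\tilde E_0=k_i\tilde E_0$, $\tilde A_i\tilde E_i=b_i\tilde E_i$, $\tilde A_i\tilde E_j=a_i\tilde E_j$ for $1\le j\le d$, $j\ne i$, with $a_i\ne b_i$. Let $1\le i,j\le d+1$ with $E_i,E_j\in\{\tilde E_1,\ldots,\tilde E_{d-1}\}$, and let $1\le r,s\le d-1$ be such that the eigenvalues of $A_r$ on $V_i$ and $V_j$ are $a_r$ and $b_r$ respectively, and the eigenvalues of $A_s$ on $V_i$ and $V_j$ are $b_s$ and $a_s$ respectively. Then $A_r$ and $A_s$ are the only two matrices among $A_0,\dots,A_{d+1}$ having distinct eigenvalues on $V_i$ and $V_j$.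
   Context: Association scheme: finite set $X$ with a partition of $X\times X$ into relations $R_0$ (diagonal), $R_1,\dots$, closed under transposition, with constant intersection numbers; commutative if these are symmetric in the lower indices. Adjacency matrices are the $01$-matrices of the relations; the primitive idempotents of the (commutative) Bose–Mesner algebra satisfy $A_iE_j=p_i(j)E_j$, and $p_i(j)$ is called the eigenvalue of $A_i$ on $V_j$. A symmetric scheme is amorphic if merging the nondiagonal relations along any partition of their index set into nonempty parts gives an association scheme. *)

(* Defs.v *)
From HB Require Import structures.
From mathcomp Require Import all_boot all_order all_algebra all_field.
Set Implicit Arguments. Unset Strict Implicit. Unset Printing Implicit Defensive.
Import Order.TTheory GRing.Theory Num.Theory.
Local Open Scope ring_scope.

(* An association scheme on X = 'I_n with classes R_0, ..., R_(D-1) is encoded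
   by the class function R : 'I_n -> 'I_n -> 'I_D, R x y = i iff (x,y) \in R_i. *)

Definition is_scheme (n D : nat) (R : 'I_n -> 'I_n -> 'I_D) : Prop :=
  (forall x y, (val (R x y) == 0%N) = (x == y)) /\
  (forall i : 'I_D, exists x y, R x y = i) /\
  (forall i : 'I_D, exists j : 'I_D, forall x y, (R x y == i) = (R y x == j)) /\
  (forall i j h : 'I_D, exists p : nat, forall x y, R x y = h ->
      #|[set z | (R x z == i) && (R z y == j)]| = p).

Definition is_comm_scheme (n D : nat) (R : 'I_n -> 'I_n -> 'I_D) : Prop :=
  is_scheme R /\
  (forall (i j : 'I_D) (x y : 'I_n),
      #|[set z | (R x z == i) && (R z y == j)]| =
      #|[set z | (R x z == j) && (R z y == i)]|).

Definition is_symmetric_scheme (n D : nat) (R : 'I_n -> 'I_n -> 'I_D) : Prop :=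
  is_scheme R /\ (forall x y, R y x = R x y).

(* amorphic: merging the nondiagonal relations along any partition of their
   index set into nonempty parts (encoded by a surjection g sending exactly the
   index 0 to 0) gives an association scheme *)
Definition is_amorphic (n D : nat) (R : 'I_n -> 'I_n -> 'I_D) : Prop :=
  is_symmetric_scheme R /\
  forall (m : nat) (g : 'I_D -> 'I_m.+1),
    (forall i : 'I_D, (g i == ord0) = (val i == 0%N)) ->
    (forall k : 'I_m.+1, exists i, g i = k) ->
    is_scheme (fun x y => g (R x y)).

Definition adj (n D : nat) (R : 'I_n -> 'I_n -> 'I_D) (i : 'I_D) : 'M[algC]_n :=
  \matrix_(x, y) ((R x y == i)%:R).

Definition in_BM (n D : nat) (R : 'I_n -> 'I_n -> 'I_D) (M : 'M[algC]_n) : Prop :=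
  exists c : 'I_D -> algC, M = \sum_(i < D) c i *: adj R i.

Definition is_idem (n : nat) (M : 'M[algC]_n) : Prop := M *m M = M.

Definition is_prim_idem (n D : nat) (R : 'I_n -> 'I_n -> 'I_D) (E : 'M[algC]_n) : Prop :=
  in_BM R E /\ E != 0 /\ is_idem E /\
  forall F, in_BM R F -> is_idem F -> F != 0 -> F *m E = F -> F = E.

Definition prim_idems (n D : nat) (R : 'I_n -> 'I_n -> 'I_D) (E : 'I_D -> 'M[algC]_n) : Prop :=
  injective E /\ (forall k, is_prim_idem R (E k)) /\
  (forall F, is_prim_idem R F -> exists k, F = E k).

(* symmetrization: R_d and R_(d+1) merged into class d *)
Definition symmetrize (n d : nat) (R : 'I_n -> 'I_n -> 'I_d.+2) : 'I_n -> 'I_n -> 'I_d.+1 :=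
  fun x y => inord (minn (R x y) d).

(* Main.v *)
Require Import Defs.
From HB Require Import structures.
From mathcomp Require Import all_boot all_order all_algebra all_field.
From mathcomp Require Import zify.
Import GRing.Theory Num.Theory.
Set Implicit Arguments. Unset Strict Implicit.
Local Open Scope ring_scope.

Lemma scal_inj n (P : 'M[algC]_n) (t u : algC) : P != 0 -> t *: P = u *: P -> t = u.
Proof.
move=> nz e; have : (t - u) *: P = 0 by rewrite scalerBl e subrr.
by move/eqP; rewrite scalemx_eq0 (negbTE nz) orbF subr_eq0 => /eqP.
Qed.

Lemma eig_inj n (M P : 'M[algC]_n) (t u : algC) : P != 0 ->
  M *m P = t *: P -> M *m P = u *: P -> t = u.
Proof. by move=> nz -> e; apply: scal_inj nz e. Qed.

Lemma half_eig n (A S P : 'M[algC]_n) (t c : algC) : P^T = P -> P *m P = P -> P != 0 ->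
  A *m P = t *: P -> S *m P = c *: P -> A + A^T = S -> t + t = c.
Proof.
move=> PT PP nz hA hS hAS.
have h1 : P *m A^T = t *: P by rewrite -{1}PT -trmx_mul hA linearZ /= PT.
have h2 : A^T *m P = (c - t) *: P.
  have -> : A^T = S - A by rewrite -hAS addrC addKr.
  by rewrite mulmxBl hS hA scalerBl.
have : t *: P = (c - t) *: P.
  transitivity ((t *: P) *m P); first by rewrite -scalemxAl PP.
  by rewrite -h1 -mulmxA h2 -scalemxAr PP.
by move/(scal_inj nz) => e; rewrite {2}e addrC subrK.
Qed.

Lemma dbl_inj (t u : algC) : t + t = u + u -> t = u.
Proof.
move=> e; apply/eqP; rewrite -subr_eq0.
have : (t - u) * 2%:R = 0 by rewrite mulrBl !mulr_natr !mulr2n e subrr.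
by move/eqP; rewrite mulf_eq0 pnatr_eq0 orbF.
Qed.

Theorem lemma3p4 (n d : nat) (R : 'I_n -> 'I_n -> 'I_d.+2)
  (E : 'I_d.+2 -> 'M[algC]_n) (Et : 'I_d.+1 -> 'M[algC]_n)
  (a b : 'I_d.+1 -> algC) (i j : 'I_d.+2) (r s : nat) :
  is_comm_scheme R ->
  (* R_d^T = R_(d+1) *)
  (forall x y, (val (R x y) == d) = (val (R y x) == d.+1)) ->
  (* R_i^T = R_i for 0 <= i <= d-1 *)
  (forall x y, (R x y < d)%N -> R y x = R x y) ->
  prim_idems R E ->
  is_amorphic (symmetrize R) ->
  prim_idems (symmetrize R) Et ->
  (forall k : 'I_d.+1, forall x : 'I_n,
     adj (symmetrize R) k *m Et ord0 =
     (#|[set y | symmetrize R x y == k]|)%:R *: Et ord0) ->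
  (forall k : 'I_d.+1, (0 < k)%N ->
     adj (symmetrize R) k *m Et k = b k *: Et k) ->
  (forall k l : 'I_d.+1, (0 < k)%N -> (0 < l)%N -> l != k ->
     adj (symmetrize R) k *m Et l = a k *: Et l) ->
  (forall k : 'I_d.+1, (0 < k)%N -> a k != b k) ->
  (0 < i)%N -> (0 < j)%N ->
  (exists k : 'I_d.+1, (0 < k < d)%N /\ E i = Et k) ->
  (exists k : 'I_d.+1, (0 < k < d)%N /\ E j = Et k) ->
  (0 < r < d)%N -> (0 < s < d)%N ->
  adj R (inord r) *m E i = a (inord r) *: E i ->
  adj R (inord r) *m E j = b (inord r) *: E j ->
  adj R (inord s) *m E i = b (inord s) *: E i ->
  adj R (inord s) *m E j = a (inord s) *: E j ->
  forall h : 'I_d.+2,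
    (exists t1 t2 : algC, t1 != t2 /\
       adj R h *m E i = t1 *: E i /\ adj R h *m E j = t2 *: E j)
    <-> (h = inord r \/ h = inord s).
Proof.
move=> [[Hdiag _] _] HdT Hsym [_ [Eprim _]] [[_ Hssym] _] [_ [Etprim _]] H0 Hb Ha Hab
  i0 j0 [ki [Hki Ei]] [kj [Hkj Ej]] Hr Hs Hri Hrj Hsi Hsj h.
have [_ [Einz [Eiid _]]] := Eprim i.
have [_ [Ejnz [Ejid _]]] := Eprim j.
have valr2 : val (inord r : 'I_d.+2) = r by rewrite /= inordK //; lia.
have vals2 : val (inord s : 'I_d.+2) = s by rewrite /= inordK //; lia.
have valr1 : val (inord r : 'I_d.+1) = r by rewrite /= inordK //; lia.
have vals1 : val (inord s : 'I_d.+1) = s by rewrite /= inordK //; lia.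
have adjS : forall h : 'I_d.+2, (h < d)%N -> adj R h = adj (symmetrize R) (inord h).
  move=> k kd; apply/matrixP => x y; rewrite !mxE /symmetrize.
  congr (_%:R); rewrite -val_eqE -[in RHS]val_eqE /= !inordK; try lia.
have Ar : adj R (inord r) = adj (symmetrize R) (inord r).
  by rewrite adjS valr2 //; case/andP: Hr.
have As : adj R (inord s) = adj (symmetrize R) (inord s).
  by rewrite adjS vals2 //; case/andP: Hs.
have kjr : kj = inord r.
  apply/eqP; apply/negPn/negP => ne.
  have := Ha (inord r) kj; rewrite valr1 => /(_ (proj1 (andP Hr)) (proj1 (andP Hkj)) ne).
  rewrite -Ar -Ej Hrj => e.
  move: (Hab (inord r)); rewrite valr1 (proj1 (andP Hr)) (scal_inj Ejnz e) eqxx.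
  by move=> /(_ isT).
have kis : ki = inord s.
  apply/eqP; apply/negPn/negP => ne.
  have := Ha (inord s) ki; rewrite vals1 => /(_ (proj1 (andP Hs)) (proj1 (andP Hki)) ne).
  rewrite -As -Ei Hsi => e.
  move: (Hab (inord s)); rewrite vals1 (proj1 (andP Hs)) (scal_inj Einz e) eqxx.
  by move=> /(_ isT).
split; last first.
  case=> ->.
    exists (a (inord r)), (b (inord r)); split => //.
    by apply: Hab; rewrite valr1; case/andP: Hr.
  exists (b (inord s)), (a (inord s)); split => //.
  by rewrite eq_sym; apply: Hab; rewrite vals1; case/andP: Hs.
case=> t1 [t2 [ne [H1 H2]]].
case: (eqVneq h (inord r)) => [->|hr]; first by left.
case: (eqVneq h (inord s)) => [->|hs]; first by right.
exfalso; move/negP: ne; apply.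
have [h0|hpos] := eqVneq (val h) 0%N.
  have I1 : adj R h = 1%:M.
    apply/matrixP => x y; rewrite !mxE.
    have -> : (R x y == h) = (val (R x y) == 0%N) by rewrite -val_eqE h0.
    by rewrite Hdiag.
  have M1 : forall M : 'M[algC]_n, adj R h *m M = M by move=> M; rewrite I1 mul1mx.
  rewrite M1 in H1; rewrite M1 in H2.
  have e1 : t1 = 1 by apply: (scal_inj Einz); rewrite -H1 scale1r.
  have e2 : t2 = 1 by apply: (scal_inj Ejnz); rewrite -H2 scale1r.
  by rewrite e1 e2.
case: (ltnP h d) => hd.
  have hh : val (inord h : 'I_d.+1) = h by rewrite /= inordK //; lia.
  have hpos' : (0 < (inord h : 'I_d.+1))%N by rewrite hh lt0n.
  rewrite adjS // in H1 H2.
  have nr : kj != inord h.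
    rewrite kjr -val_eqE /= hh valr1; apply/eqP => e; move: hr; rewrite -val_eqE /= valr2 e eqxx //.
  have ns : ki != inord h.
    rewrite kis -val_eqE /= hh vals1; apply/eqP => e; move: hs; rewrite -val_eqE /= vals2 e eqxx //.
  have e1 := Ha (inord h) ki hpos' (proj1 (andP Hki)) ns.
  have e2 := Ha (inord h) kj hpos' (proj1 (andP Hkj)) nr.
  rewrite -Ei in e1; rewrite -Ej in e2.
  by rewrite (eig_inj Einz H1 e1) (eig_inj Ejnz H2 e2).
have dpos : (0 < d)%N by have [? ?] := andP Hr; lia.
have hS : adj R h + (adj R h)^T = adj (symmetrize R) ord_max.
  apply/matrixP => x y; rewrite !mxE /symmetrize -natrD; congr (_%:R).
  have hxy : (nat_of_ord (R x y) == d) = (nat_of_ord (R y x) == d.+1) := HdT x y.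
  have hyx : (nat_of_ord (R y x) == d) = (nat_of_ord (R x y) == d.+1) := HdT y x.
  have ux := ltn_ord (R x y); have uy := ltn_ord (R y x); have hl := ltn_ord h.
  rewrite -!val_eqE /= inordK; last by lia.
  move: hxy hyx.
  repeat (case: eqP => ? /=); lia.
have symT : forall k, (Et k)^T = Et k.
  move=> k; have [[c ->] _] := Etprim k.
  apply/matrixP => x y; rewrite !mxE !summxE; apply: eq_bigr => l _.
  by rewrite !mxE Hssym.
have nmax : forall k : 'I_d.+1, (k < d)%N -> k != ord_max.
  by move=> k kd; rewrite -val_eqE /=; apply/eqP; lia.
have m0 : (0 < (ord_max : 'I_d.+1))%N by [].
have Si := Ha ord_max ki dpos (proj1 (andP Hki)) (nmax _ (proj2 (andP Hki))).
have Sj := Ha ord_max kj dpos (proj1 (andP Hkj)) (nmax _ (proj2 (andP Hkj))).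
rewrite -Ei in Si; rewrite -Ej in Sj.
have e1 := half_eig (symT ki) _ _ _ _ hS.
rewrite -Ei in e1; have {}e1 := e1 _ _ Eiid Einz H1 Si.
have e2 := half_eig (symT kj) _ _ _ _ hS.
rewrite -Ej in e2; have {}e2 := e2 _ _ Ejid Ejnz H2 Sj.
by apply/eqP; apply: dbl_inj; rewrite e1 e2.
Qed.
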